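(* Let $P$ be a treetope with base $B$. Then for every face $F$ of $P$ with $\dim F>1$, either $F\subseteq B$, or $F\cap B$ is a facet of $F$ and $F$ is a treetope with base $F\cap B$. In particular, $\dim(F\cap B)\ge \dim F-1$ for every face $F$ of $P$ with $\dim F>1$.
   Context: A polytope is the convex hull of a finite set of points in a Euclidean space; faces, vertices, edges, facets and the graph (1-skeleton) are as usual. A \emph{treetope} is a polytope $P$ together with a distinguished facet $B$ (the \emph{base}) such that every face $F$ of $P$ whose intersection $F\cap B$ consists of at most one point has dimension at most one. *)

(* Defs.v *)
From HB Require Import structures.
From mathcomp Require Import all_boot all_order all_algebra.
Set Implicit Arguments. Unset Strict Implicit. Unset Printing Implicit Defensive.
Import Order.TTheory GRing.Theory Num.Theory.
Local Open Scope ring_scope.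

Section Polytopes.
Variables (R : realFieldType) (n : nat).
Notation pt := 'rV[R]_n.
Definition pset := pt -> Prop.

Definition dotv (u v : pt) : R := \sum_(i < n) u ord0 i * v ord0 i.

Definition conv (V : seq pt) : pset := fun x =>
  exists w : 'I_(size V) -> R,
    (forall i, 0 <= w i) /\ \sum_(i < size V) w i = 1 /\
    x = \sum_(i < size V) w i *: V`_i.

Definition is_polytope (P : pset) : Prop :=
  exists V : seq pt, forall x, P x <-> conv V x.

Definition psubset (A B : pset) : Prop := forall x, A x -> B x.
Definition psetI (A B : pset) : pset := fun x => A x /\ B x.

(* faces: intersections of P with a (weakly) valid inequality; this includes
   the empty face and P itself (a = 0). *)
Definition face (P F : pset) : Prop :=
  exists (a : pt) (b : R),
    (forall x, P x -> dotv a x <= b) /\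
    (forall x, F x <-> (P x /\ dotv a x = b)).

Definition aff_indep (ps : seq pt) : Prop :=
  forall c : 'I_(size ps) -> R,
    \sum_(i < size ps) c i = 0 ->
    \sum_(i < size ps) c i *: ps`_i = 0 ->
    forall i, c i = 0.

(* dim_is S d : the affine dimension of S is d (d = -1 iff S is empty),
   i.e. d+1 is the maximal number of affinely independent points of S. *)
Definition dim_is (S : pset) (d : int) : Prop :=
  exists m : nat, d = (m%:Z - 1)%R /\
    (exists ps : seq pt, size ps = m /\ (forall x, x \in ps -> S x) /\ aff_indep ps) /\
    (forall ps : seq pt, (forall x, x \in ps -> S x) -> aff_indep ps -> (size ps <= m)%N).

Definition facet (P F : pset) : Prop :=
  face P F /\ exists d : int, dim_is P d /\ dim_is F (d - 1).

Definition treetope (P B : pset) : Prop :=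
  is_polytope P /\ facet P B /\
  forall F, face P F ->
    (forall x y, F x -> B x -> F y -> B y -> x = y) ->
    forall d : int, dim_is F d -> d <= 1.

End Polytopes.

(* Main.v *)
Require Import Defs.
From HB Require Import structures.
From mathcomp Require Import all_boot all_order all_algebra.
From mathcomp Require Import ring lra zify.
From Stdlib Require Import Classical.
Import Order.TTheory GRing.Theory Num.Theory.
Local Open Scope ring_scope.
Set Implicit Arguments. Unset Strict Implicit. Unset Printing Implicit Defensive.



Section Basics.
Variables (R : realFieldType) (n : nat).
Notation pt := 'rV[R]_n.

Lemma dotv_lin m (w : 'I_m -> R) (v : 'I_m -> pt) (a : pt) :
  dotv a (\sum_(i < m) w i *: v i) = \sum_(i < m) w i * dotv a (v i).
Proof.
rewrite /dotv.
under eq_bigr do rewrite summxE.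
under [RHS]eq_bigr do rewrite mulr_sumr.
rewrite exchange_big /=; apply: eq_bigr => j _; rewrite mulr_sumr.
by apply: eq_bigr => i _; rewrite mxE mulrCA.
Qed.

Lemma dotvD (a x y : pt) : dotv a (x + y) = dotv a x + dotv a y.
Proof. by rewrite /dotv -big_split /=; apply: eq_bigr => i _; rewrite mxE mulrDr. Qed.
Lemma dotvZ (a x : pt) (k : R) : dotv a (k *: x) = k * dotv a x.
Proof. by rewrite /dotv mulr_sumr; apply: eq_bigr => i _; rewrite mxE mulrCA. Qed.
Lemma dotvN (a x : pt) : dotv a (- x) = - dotv a x.
Proof. by rewrite -scaleN1r dotvZ mulN1r. Qed.
Lemma dotvB (a x y : pt) : dotv a (x - y) = dotv a x - dotv a y.
Proof. by rewrite dotvD dotvN. Qed.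
Lemma dotvDl (a b x : pt) : dotv (a + b) x = dotv a x + dotv b x.
Proof. by rewrite /dotv -big_split /=; apply: eq_bigr => i _; rewrite mxE mulrDl. Qed.
Lemma dotvZl (a x : pt) (k : R) : dotv (k *: a) x = k * dotv a x.
Proof. by rewrite /dotv mulr_sumr; apply: eq_bigr => i _; rewrite mxE mulrA. Qed.
Lemma dotvNl (a x : pt) : dotv (- a) x = - dotv a x.
Proof. by rewrite -scaleN1r dotvZl mulN1r. Qed.
Lemma dotvC (a x : pt) : dotv a x = dotv x a.
Proof. by rewrite /dotv; apply: eq_bigr => i _; rewrite mulrC. Qed.
Lemma dotv_ge0 (x : pt) : 0 <= dotv x x.
Proof. by rewrite /dotv sumr_ge0 // => i _; rewrite -expr2 sqr_ge0. Qed.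
Lemma dotv_gt0 (x : pt) : x != 0 -> 0 < dotv x x.
Proof.
move=> nz; rewrite lt_def dotv_ge0 andbT; apply: contraNneq nz => /eqP H.
apply/eqP/rowP => j; rewrite mxE.
have h0 : forall i : 'I_n, predT i -> 0 <= x 0 i * x 0 i by move=> i _; rewrite -expr2 sqr_ge0.
have := @psumr_eq0P _ _ predT (fun i => x 0 i * x 0 i) h0 (eqP H) j isT.
by move/eqP; rewrite mulf_eq0 orbb => /eqP.
Qed.

Lemma sumS (M : nmodType) k (F : nat -> M) :
  \sum_(i < k.+1) F i = F 0%N + \sum_(i < k) F i.+1.
Proof. by rewrite big_ord_recl; congr (_ + _); apply: eq_bigr => i _; rewrite lift0. Qed.

Lemma sumSs k (w : nat -> R) (a : pt) (s : seq pt) :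
  \sum_(i < k.+1) w i *: (a :: s)`_i = w 0%N *: a + \sum_(i < k) w i.+1 *: s`_i.
Proof. by rewrite (sumS k (fun i => w i *: (a :: s)`_i)). Qed.

Definition convn (V : seq pt) (x : pt) := exists w : nat -> R,
  (forall i, 0 <= w i) /\ \sum_(i < size V) w i = 1 /\
  x = \sum_(i < size V) w i *: V`_i.

Lemma conv_convn V x : conv V x <-> convn V x.
Proof.
split.
  case=> w [w0 [w1 ->]].
  pose wn k := \sum_(i < size V | val i == k) w i.
  have wnE (j : 'I_(size V)) : wn j = w j.
    by rewrite /wn (big_pred1 j) // => i; rewrite /= val_eqE.
  exists wn; split; first by move=> k; rewrite sumr_ge0.
  by split; [rewrite -w1 | ]; apply: eq_bigr => i _; rewrite wnE.
case=> w [w0 [w1 ->]]; exists (fun i => w (val i)); split => //.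
Qed.

Lemma convn_mem V v : v \in V -> convn V v.
Proof.
move=> vV; exists (fun k => (k == index v V)%:R); split.
  by move=> i; rewrite ler0n.
have iV : (index v V < size V)%N by rewrite index_mem.
split.
  rewrite (bigD1 (Ordinal iV)) //= eqxx big1 ?addr0 // => i /negbTE.
  by rewrite -val_eqE /= => ->.
rewrite (bigD1 (Ordinal iV)) //= eqxx big1 ?addr0 ?scale1r ?nth_index //.
by move=> i /negbTE; rewrite -val_eqE /= => ->; rewrite scale0r.
Qed.

Lemma convn_filter_gen (p : pred pt) V : forall (u : R) (x : pt),
  (exists w : nat -> R, (forall i, 0 <= w i) /\
     \sum_(i < size (filter p V)) w i = u /\
     x = \sum_(i < size (filter p V)) w i *: (filter p V)`_i) <->
  (exists w : nat -> R, (forall i, 0 <= w i) /\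
     (forall i, (i < size V)%N -> ~~ p V`_i -> w i = 0) /\
     \sum_(i < size V) w i = u /\ x = \sum_(i < size V) w i *: V`_i).
Proof.
elim: V => [|a V IH] u x.
  split; case=> w [w0 H]; exists w; first by [].
  by case: H.
rewrite /=; case pa: (p a) => /=.
  split.
    case=> w [w0 [w1 wx]].
    move: w1 wx; rewrite sumS sumSs => w1 wx.
    have [|w' [w'0 [w'p [w'1 w'x]]]] := proj1 (IH (u - w 0%N) (x - w 0%N *: a)).
      exists (fun i => w i.+1); split=> //; split.
        by rewrite -w1 addrAC subrr add0r.
      by rewrite wx addrAC subrr add0r.
    pose wc i := if i is j.+1 then w' j else w 0%N.
    exists wc; split.
      by move=> [|i]; rewrite /wc.
    split; first by move=> [|i] //=; [rewrite pa | rewrite /wc; exact: w'p].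
    rewrite sumS sumSs /= w'1 -w'x; split; [rewrite addrC subrK | rewrite addrC subrK] => //.
  case=> w [w0 [wp [w1 wx]]].
  move: w1 wx; rewrite sumS sumSs => w1 wx.
  have [|w' [w'0 [w'1 w'x]]] := proj2 (IH (u - w 0%N) (x - w 0%N *: a)).
    exists (fun i => w i.+1); split=> //; split; first by move=> i hi; exact: (wp i.+1).
    split; first by rewrite -w1 addrAC subrr add0r.
    by rewrite wx addrAC subrr add0r.
  pose wc i := if i is j.+1 then w' j else w 0%N.
  exists wc; split; first by move=> [|i]; rewrite /wc.
  rewrite sumS sumSs /= w'1 -w'x; split; [rewrite addrC subrK | rewrite addrC subrK] => //.
split.
  case=> w [w0 [w1 wx]].
  have [|w' [w'0 [w'p [w'1 w'x]]]] := proj1 (IH u x).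
    by exists w.
  pose wc i := if i is j.+1 then w' j else 0.
  exists wc; split; first by move=> [|i]; rewrite /wc.
  split; first by move=> [|i] //=; rewrite /wc; exact: w'p.
  by rewrite sumS sumSs /= scale0r !add0r.
case=> w [w0 [wp [w1 wx]]].
have wa : w 0%N = 0 by apply: wp => //=; rewrite pa.
move: w1 wx; rewrite sumS sumSs wa scale0r !add0r => w1 wx.
apply/(IH u x); exists (fun i => w i.+1); split=> //; split=> //.
by move=> i hi; exact: (wp i.+1).
Qed.

Lemma convn_filter (p : pred pt) V x :
  convn (filter p V) x <->
  (exists w : nat -> R, (forall i, 0 <= w i) /\
     (forall i, (i < size V)%N -> ~~ p V`_i -> w i = 0) /\
     \sum_(i < size V) w i = 1 /\ x = \sum_(i < size V) w i *: V`_i).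
Proof. exact: convn_filter_gen. Qed.

Lemma dotv_comb (V : seq pt) (w : nat -> R) (a : pt) :
  dotv a (\sum_(i < size V) w i *: V`_i) = \sum_(i < size V) w i * dotv a V`_i.
Proof. exact: (dotv_lin (fun i : 'I_(size V) => w i) (fun i : 'I_(size V) => V`_i)). Qed.

Lemma comb_le (V : seq pt) (w : nat -> R) (a : pt) (b : R) :
  (forall i, 0 <= w i) -> \sum_(i < size V) w i = 1 ->
  (forall v, v \in V -> dotv a v <= b) ->
  dotv a (\sum_(i < size V) w i *: V`_i) <= b.
Proof.
move=> w0 w1 Vb; rewrite dotv_comb -[b]mul1r -w1 mulr_suml.
by apply: ler_sum => i _; rewrite ler_wpM2l // Vb // mem_nth.
Qed.

Lemma convn_le (V : seq pt) (x a : pt) (b : R) : convn V x ->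
  (forall v, v \in V -> dotv a v <= b) -> dotv a x <= b.
Proof. by case=> w [w0 [w1 ->]]; apply: comb_le. Qed.

Lemma comb_tight (V : seq pt) (w : nat -> R) (a : pt) (b : R) :
  (forall i, 0 <= w i) -> \sum_(i < size V) w i = 1 ->
  (forall v, v \in V -> dotv a v <= b) ->
  dotv a (\sum_(i < size V) w i *: V`_i) = b ->
  forall i, (i < size V)%N -> w i != 0 -> dotv a V`_i = b.
Proof.
move=> w0 w1 Vb; rewrite dotv_comb => eq i iV wi.
have h0 : forall j : 'I_(size V), predT j -> 0 <= w j * (b - dotv a V`_j).
  by move=> j _; rewrite mulr_ge0 // subr_ge0 Vb // mem_nth.
have hs : \sum_(j < size V | predT j) w j * (b - dotv a V`_j) = 0.
  under eq_bigr do rewrite mulrBr.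
  by rewrite sumrB -mulr_suml w1 mul1r eq subrr.
have := psumr_eq0P h0 hs (i := Ordinal iV) isT => /= /eqP.
rewrite mulf_eq0 (negbTE wi) /= subr_eq0 => /eqP ->. done.
Qed.

Lemma comb_supp (V : seq pt) (w : nat -> R) (a : pt) (b : R) :
  \sum_(i < size V) w i = 1 ->
  (forall i, (i < size V)%N -> w i != 0 -> dotv a V`_i = b) ->
  dotv a (\sum_(i < size V) w i *: V`_i) = b.
Proof.
move=> w1 sup; rewrite dotv_comb -[b]mul1r -w1 mulr_suml.
apply: eq_bigr => i _; have [->|wi] := eqVneq (w i) 0; first by rewrite !mul0r.
by rewrite sup.
Qed.

Definition tightp (a : pt) (b : R) : pred pt := fun v => dotv a v == b.

Lemma face_convn (V : seq pt) (P F : pset R n) (a : pt) (b : R) :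
  (forall x, P x <-> convn V x) -> (forall x, P x -> dotv a x <= b) ->
  (forall x, F x <-> P x /\ dotv a x = b) ->
  forall x, F x <-> convn (filter (tightp a b) V) x.
Proof.
move=> PV Pa FP x.
have Vb : forall v, v \in V -> dotv a v <= b.
  by move=> v vV; apply: Pa; apply/PV; apply: convn_mem.
split.
  move=> /FP [/PV [w [w0 [w1 wx]]] ax].
  apply/convn_filter; exists w; split=> //; split; last by [].
  move=> i iV; apply: contraNeq => wi; apply/eqP.
  by apply: (comb_tight w0 w1 Vb) => //; rewrite -wx.
move=> /convn_filter [w [w0 [wp [w1 wx]]]]; apply/FP; split.
  by apply/PV; exists w.
rewrite wx; apply: comb_supp => // i iV wi; apply/eqP.
by apply: contraNT wi => /(wp i iV) ->.
Qed.

Lemma le_sum_mem (T : eqType) (s : seq T) (f : T -> R) v :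
  (forall u, 0 <= f u) -> v \in s -> f v <= \sum_(u <- s) f u.
Proof.
move=> f0 vs; rewrite (big_rem v) //= lerDl sumr_ge0 //.
Qed.

Lemma face_face (V : seq pt) (P F G : pset R n) :
  (forall x, P x <-> convn V x) -> face P F -> face F G -> face P G.
Proof.
move=> PV [a [b [Pa FP]]] [c [e [Fc GF]]].
have Vb : forall v, v \in V -> dotv a v <= b.
  by move=> v vV; apply: Pa; apply/PV; apply: convn_mem.
pose lam := 1 + \sum_(v <- V) `|(dotv c v - e) / (b - dotv a v)|.
have key : forall v, v \in V -> dotv a v < b ->
    b - dotv a v <= (e + lam * b) - (dotv c v + lam * dotv a v).
  move=> v vV avb.
  have hpos : 0 < b - dotv a v by rewrite subr_gt0.
  have hle := @le_sum_mem _ V (fun v => `|(dotv c v - e) / (b - dotv a v)|) v (fun u => normr_ge0 _) vV.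
  have h1 : dotv c v - e <= `|(dotv c v - e) / (b - dotv a v)| * (b - dotv a v).
    rewrite -[X in X <= _](divfK (lt0r_neq0 hpos)) ler_wpM2r ?(ltW hpos) //.
    exact: ler_norm.
  have h2 : `|(dotv c v - e) / (b - dotv a v)| * (b - dotv a v) <=
      (lam - 1) * (b - dotv a v).
    by rewrite ler_wpM2r ?(ltW hpos) // /lam addrAC subrr add0r.
  have -> : (e + lam * b) - (dotv c v + lam * dotv a v) =
      (lam - 1) * (b - dotv a v) - (dotv c v - e) + (b - dotv a v) by ring.
  rewrite lerDr subr_ge0; exact: le_trans h1 h2.
have Vval : forall v, v \in V -> dotv (c + lam *: a) v <= e + lam * b.
  move=> v vV; rewrite dotvDl dotvZl.
  have := Vb v vV; rewrite le_eqVlt => /orP [/eqP avb|avb].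
    have Fv : F v.
      apply/(face_convn PV Pa FP); apply: convn_mem.
      by rewrite mem_filter /tightp avb eqxx.
    by rewrite avb lerD2r Fc.
  rewrite -subr_ge0; apply: le_trans (key v vV avb); rewrite subr_ge0 ltW //.
exists (c + lam *: a), (e + lam * b); split.
  by move=> x /PV Px; apply: convn_le Px Vval.
move=> x; split.
  move=> /GF [Fx cx]; have [Px ax] := proj1 (FP x) Fx.
  by split=> //; rewrite dotvDl dotvZl cx ax.
move=> [/PV [w [w0 [w1 wx]]] eq].
have tight := comb_tight w0 w1 Vval (etrans (esym (f_equal _ wx)) eq).
have ax : dotv a x = b.
  rewrite wx; apply: comb_supp => // i iV wi.
  have := tight i iV wi; have := Vb _ (mem_nth 0 iV).
  rewrite le_eqVlt => /orP [/eqP //| avb] h.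
  have := key _ (mem_nth 0 iV) avb; rewrite -dotvZl -dotvDl h subrr.
  by rewrite subr_le0 leNgt avb.
have Fx : F x by apply/FP; split=> //; apply/PV; exists w.
apply/GF; split=> //.
by move: eq; rewrite dotvDl dotvZl ax => /addIr.
Qed.

End Basics.



Section Lin.
Variables (R : realFieldType) (n : nat).
Notation pt := 'rV[R]_n.

Definition hx (x : pt) : 'rV[R]_(1 + n) := row_mx (const_mx 1) x.
Definition Mf m (g : 'I_m -> pt) : 'M[R]_(m, 1 + n) := \matrix_(i < m) hx (g i).
Definition ML (L : seq pt) := Mf (fun i : 'I_(size L) => L`_i).
Definition fy (y : 'rV[R]_(1 + n)) (x : pt) : R := \sum_j hx x 0 j * y 0 j.

Definition nf m (f : 'I_m -> R) (k : nat) : R := \sum_(i < m | val i == k) f i.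
Lemma nfE m (f : 'I_m -> R) (i : 'I_m) : nf f i = f i.
Proof. by rewrite /nf (big_pred1 i) // => j; rewrite /= val_eqE. Qed.

Lemma fy_row (y0 : 'rV[R]_1) (y1 : pt) x : fy (row_mx y0 y1) x = y0 0 0 + dotv y1 x.
Proof.
rewrite /fy big_split_ord /= big_ord1; congr (_ + _).
  by rewrite /hx !row_mxEl mxE mul1r; congr (y0 _ _); apply: val_inj.
by apply: eq_bigr => j _; rewrite /hx !row_mxEr mulrC.
Qed.

Lemma Mf_mul m (g : 'I_m -> pt) (v : 'rV[R]_m) :
  v *m Mf g = row_mx (const_mx (\sum_i v 0 i)) (\sum_i v 0 i *: g i).
Proof.
rewrite -[LHS]hsubmxK; congr row_mx; apply/matrixP => k j.
  rewrite [LHS]mxE [LHS]mxE [RHS]mxE; apply: eq_bigr => i _.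
  rewrite [Mf g i _]mxE /hx row_mxEl mxE mulr1.
  by rewrite ord1.
rewrite [LHS]mxE [LHS]mxE summxE; apply: eq_bigr => i _.
rewrite [Mf g i _]mxE /hx row_mxEr [RHS]mxE.
by rewrite ord1.
Qed.

Lemma Mf_tr_entry m (g : 'I_m -> pt) (y : 'rV[R]_(1 + n)) (i : 'I_m) :
  (y *m (Mf g)^T) 0 i = fy y (g i).
Proof. by rewrite !mxE /fy; apply: eq_bigr => j _; rewrite !mxE mulrC. Qed.

Definition aff_indepn (ps : seq pt) := forall c : nat -> R,
  \sum_(i < size ps) c i = 0 -> \sum_(i < size ps) c i *: ps`_i = 0 ->
  forall i, (i < size ps)%N -> c i = 0.

Lemma aff_indep_n ps : aff_indep ps <-> aff_indepn ps.
Proof.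
split.
  move=> H c c0 c1 i ip.
  exact: (H (fun i : 'I_(size ps) => c i) c0 c1 (Ordinal ip)).
move=> H c c0 c1 i; rewrite -nfE; apply: H => //.
  by rewrite -[RHS]c0; apply: eq_bigr => j _; rewrite nfE.
by rewrite -[RHS]c1; apply: eq_bigr => j _; rewrite nfE.
Qed.

Lemma free_indep m (g : 'I_m -> pt) (c : nat -> R) :
  row_free (Mf g) -> \sum_(i < m) c i = 0 -> \sum_(i < m) c i *: g i = 0 ->
  forall i : 'I_m, c i = 0.
Proof.
move=> fr c0 c1 i.
have : (\row_(j < m) c j) *m Mf g == 0.
  rewrite Mf_mul; apply/eqP.
  under eq_bigr do rewrite mxE.
  under [X in row_mx _ X]eq_bigr do rewrite mxE.
  by rewrite c0 c1 row_mx0 -[X in const_mx X = _]/(0 : R); apply/matrixP => a b; rewrite !mxE.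
rewrite mulmx_free_eq0 // => /eqP /matrixP /(_ 0 i); by rewrite !mxE.
Qed.

Lemma indep_free (ps : seq pt) : aff_indepn ps -> row_free (ML ps).
Proof.
move=> H; apply: inj_row_free => v.
rewrite /ML Mf_mul => /eqP; rewrite row_mx_eq0 => /andP [/eqP h0 /eqP h1].
apply/rowP => i; rewrite mxE -nfE; apply: H => //.
  have := congr1 (fun M : 'M_1 => M 0 0) h0; rewrite /= !mxE => h.
  by rewrite -[RHS]h; apply: eq_bigr => j _; rewrite nfE.
by rewrite -[RHS]h1; apply: eq_bigr => j _; rewrite nfE.
Qed.


Lemma hx_comb (L : seq pt) (w : nat -> R) :
  \sum_(i < size L) w i = 1 ->
  hx (\sum_(i < size L) w i *: L`_i) = (\row_(j < size L) w j) *m ML L.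
Proof.
move=> w1; rewrite /ML Mf_mul /hx.
have E : forall i : 'I_(size L), (\row_(j < size L) w j) 0 i = w i by move=> i; rewrite mxE.
rewrite (eq_bigr (fun i : 'I_(size L) => w i)); last by move=> i _; rewrite E.
rewrite [in RHS](eq_bigr (fun i : 'I_(size L) => w i *: L`_i)); last by move=> i _; rewrite E.
by rewrite w1.
Qed.

Lemma dim_convn (S : pset R n) (L : seq pt) :
  (forall x, S x <-> convn L x) -> dim_is S ((\rank (ML L))%:Z - 1).
Proof.
move=> SL; exists (\rank (ML L)); split => //; split.
  pose f := maxrankfun (ML L).
  pose g := fun i => L`_(f i).
  pose ps := map g (enum 'I_(\rank (ML L))).
  have Hs : size ps = \rank (ML L) by rewrite size_map size_enum_ord.
  have psE : forall i : 'I_(\rank (ML L)), ps`_i = g i.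
    move=> i; rewrite (nth_map i) ?size_enum_ord //; congr g.
    by apply: val_inj; rewrite /= nth_enum_ord.
  have fr : row_free (Mf g).
    have -> : Mf g = rowsub f (ML L) by apply/matrixP => i j; rewrite !mxE.
    exact: maxrowsub_free.
  exists ps; split => //; split.
    move=> x /mapP [i _ ->]; apply/SL; apply: convn_mem; exact: mem_nth.
  apply/aff_indep_n => c; rewrite Hs => c0 c1 i ip.
  have c1' : \sum_(i < \rank (ML L)) c i *: g i = 0.
    by rewrite -[RHS]c1; apply: eq_bigr => j _; rewrite psE.
  exact: (free_indep fr c0 c1' (Ordinal ip)).
move=> ps psS /aff_indep_n /indep_free fr.
have -> : size ps = \rank (ML ps) by move: fr; rewrite /row_free => /eqP ->.
apply: mxrankS; apply/row_subP => i.
rewrite /ML /Mf rowK.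
have [w [w0 [w1 ->]]] := proj1 (SL _) (psS _ (mem_nth 0 (ltn_ord i))).
by rewrite hx_comb // submxMl.
Qed.

End Lin.



Section Ker.
Variables (R : realFieldType) (n : nat).
Notation pt := 'rV[R]_n.

Definition NL (L : seq pt) := (ML L)^T.

Lemma fyker (L : seq pt) (y : 'rV[R]_(1 + n)) :
  (y *m NL L == 0) = all (fun x => fy y x == 0) L.
Proof.
apply/eqP/allP.
  move=> H x xL; have := congr1 (fun M : 'M_(1, size L) => M 0 (Ordinal (etrans (index_mem x L) xL))) H.
  by rewrite /NL /ML Mf_tr_entry /= mxE nth_index // => ->.
move=> H; apply/rowP => i; rewrite /NL /ML Mf_tr_entry mxE.
by apply/eqP; apply: H; apply: mem_nth.
Qed.

Lemma ker_sub (W WG : seq pt) : {subset WG <= W} ->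
  (kermx (NL W) <= kermx (NL WG))%MS.
Proof.
move=> sub; rewrite sub_kermx; apply/eqP/row_matrixP => k.
rewrite row_mul row0; apply/eqP; rewrite fyker; apply/allP => x /sub xW.
have : row k (kermx (NL W)) *m NL W == 0 by rewrite -row_mul mulmx_ker row0.
by rewrite fyker => /allP /(_ x xW).
Qed.

Lemma rank_diff (W WG : seq pt) : {subset WG <= W} ->
  (\rank (kermx (NL WG) *m NL W) + (1 + n - \rank (ML W)) = 1 + n - \rank (ML WG))%N.
Proof.
move=> sub.
have := mxrank_mul_ker (kermx (NL WG)) (NL W).
rewrite (capmx_idPr (ker_sub sub)) !mxrank_ker /NL !mxrank_tr.
done.
Qed.

End Ker.



Section Lines.
Variable (R : realFieldType).

Lemma argmin_seq (T : eqType) (s : seq T) (f : T -> R) :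
  s != [::] -> exists2 y, y \in s & forall z, z \in s -> f y <= f z.
Proof.
elim: s => [//|a s IH] _.
case: (eqVneq s [::]) => [->|sn].
  by exists a; rewrite ?mem_head // => z; rewrite inE => /eqP ->.
have [y ys ymin] := IH sn.
case: (leP (f a) (f y)) => h.
  exists a; first by rewrite mem_head.
  move=> z; rewrite inE => /orP [/eqP -> //|zs]; exact: le_trans h (ymin z zs).
exists y; first by rewrite inE ys orbT.
move=> z; rewrite inE => /orP [/eqP -> |zs]; [exact: ltW | exact: ymin].
Qed.

Lemma lines_aux (T : eqType) (L : seq T) (A S : T -> R) z0 :
  z0 \in L -> (forall z, z \in L -> A z0 <= A z) ->
  (forall z, z \in L -> S z < S z0 -> A z0 < A z) ->
  (exists2 x, x \in L & S x < S z0) ->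
  exists b y, [/\ y \in L, S y != S z0, A z0 + b * S z0 = A y + b * S y &
    forall z, z \in L -> A z0 + b * S z0 <= A z + b * S z].
Proof.
move=> z0L Amin Sgt [x xL Sx].
pose L' := filter (fun z => S z < S z0) L.
have xL' : x \in L' by rewrite mem_filter Sx xL.
have L'n : L' != [::] by apply/negP => /eqP e; rewrite e in xL'.
pose t z := (A z - A z0) / (S z0 - S z).
have [y yL' ymin] := argmin_seq t L'n.
move: yL'; rewrite mem_filter => /andP [Sy yL].
have dpos : 0 < S z0 - S y by rewrite subr_gt0.
have tpos : 0 <= t y.
  by apply: divr_ge0; rewrite subr_ge0; [exact: (ltW (Sgt y yL Sy)) | exact: ltW].
exists (t y), y; split => //.
- by rewrite lt_eqF.
- rewrite /t; field; by rewrite lt0r_neq0.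
move=> z zL; case: (ltP (S z) (S z0)) => Sz.
  have := ymin z; rewrite mem_filter Sz zL => /(_ isT).
  have dz : 0 < S z0 - S z by rewrite subr_gt0.
  rewrite {2}/t ler_pdivlMr // => h.
  move: h; rewrite mulrBr; lra.
have h := Amin z zL.
have : 0 <= t y * (S z - S z0) by rewrite mulr_ge0 // subr_ge0.
rewrite mulrBr; lra.
Qed.

Lemma lines (T : eqType) (L : seq T) (A S : T -> R) x1 x2 :
  x1 \in L -> x2 \in L -> S x1 != S x2 ->
  exists b y1 y2, [/\ y1 \in L, y2 \in L, S y1 != S y2,
    A y1 + b * S y1 = A y2 + b * S y2 &
    forall z, z \in L -> A y1 + b * S y1 <= A z + b * S z].
Proof.
move=> x1L x2L Sx.
have Ln : L != [::] by apply/eqP => e; rewrite e in x1L.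
have [z0 z0L Amin] := argmin_seq A Ln.
case: (boolP (has (fun z => (A z == A z0) && (S z != S z0)) L)).
  move=> /hasP [z zL /andP [/eqP Az Sz]].
  exists 0, z0, z; split => //.
  - by rewrite eq_sym.
  - by rewrite !mul0r !addr0 Az.
  by move=> w wL; rewrite !mul0r !addr0 Amin.
move=> /hasPn H.
have eqS : forall z, z \in L -> A z = A z0 -> S z = S z0.
  move=> z zL Az; have := H z zL; rewrite /= Az eqxx /= => /negbNE /eqP //.
have [x xL Sx0] : exists2 x, x \in L & S x != S z0.
  case: (eqVneq (S x1) (S z0)) => e; last by exists x1.
  by exists x2 => //; rewrite -e eq_sym.
case: (ltgtP (S x) (S z0)) Sx0 => // Sxz _.
  have [b [y [yL Sy e1 e2]]] := @lines_aux T L A S z0 z0L Amin (fun z zL Sz => ltac:(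
    rewrite lt_neqAle Amin // andbT; apply/eqP => Az; move: Sz;
    by rewrite (eqS z zL (esym Az)) ltxx)) (ex_intro2 _ _ x xL Sxz).
  by exists b, z0, y; split => //; rewrite eq_sym.
have Sx' : (fun z => - S z) x < (fun z => - S z) z0 by rewrite /= ltrN2.
have Sg : forall z, z \in L -> (fun z => - S z) z < (fun z => - S z) z0 -> A z0 < A z.
  move=> z zL Sz; rewrite lt_neqAle Amin // andbT; apply/eqP => Az; move: Sz => /=.
  by rewrite (eqS z zL (esym Az)) ltxx.
have [b [y [yL Sy e1 e2]]] := @lines_aux T L A (fun z => - S z) z0 z0L Amin Sg (ex_intro2 _ _ x xL Sx').
exists (- b), z0, y; split => //.
- by move: Sy; rewrite eqr_opp eq_sym.
- by move: e1; rewrite !mulrN !mulNr.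
by move=> z zL; move: (e2 z zL); rewrite !mulrN !mulNr.
Qed.

End Lines.



Section Geom.
Variables (R : realFieldType) (n : nat).
Notation pt := 'rV[R]_n.

Lemma dotv0r (a : pt) : dotv a 0 = 0.
Proof. by rewrite /dotv big1 // => i _; rewrite mxE mulr0. Qed.

Lemma sum3 (M : nmodType) (F : nat -> M) : \sum_(i < 3) F i = F 0%N + (F 1%N + F 2%N).
Proof. by rewrite !big_ord_recl big_ord0 addr0. Qed.

Lemma indep3 (g q1 q2 aB psi : pt) (bB psi0 : R) :
  dotv aB g = bB -> psi0 + dotv psi g = 0 ->
  (psi0 + dotv psi q1) * (bB - dotv aB q2) != (psi0 + dotv psi q2) * (bB - dotv aB q1) ->
  aff_indep [:: g; q1; q2].
Proof.
move=> sg pg det; apply/aff_indep_n => c /=.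
rewrite (sum3 c) (sum3 (fun i => c i *: [:: g; q1; q2]`_i)) /= => E0 E.
have E1 := congr1 (dotv aB) E; have E2 := congr1 (dotv psi) E.
move: E1 E2; rewrite !dotvD !dotvZ !dotv0r sg => E1 E2.
set A1 := dotv aB q1 in E1 det; set A2 := dotv aB q2 in E1 det.
set P0 := dotv psi g in E2 pg; set P1 := dotv psi q1 in E2 det; set P2 := dotv psi q2 in E2 det.
have es : c 1%N * (bB - A1) + c 2%N * (bB - A2) = 0.
  transitivity ((c 0%N + (c 1%N + c 2%N)) * bB - (c 0%N * bB + (c 1%N * A1 + c 2%N * A2)));
    first by ring.
  by rewrite E0 E1; ring.
have ep : c 1%N * (psi0 + P1) + c 2%N * (psi0 + P2) = 0.
  have P0e : P0 = - psi0 by apply/eqP; rewrite -subr_eq0 opprK addrC pg.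
  transitivity ((c 0%N + (c 1%N + c 2%N)) * psi0 + (c 0%N * P0 + (c 1%N * P1 + c 2%N * P2)));
    first by rewrite P0e; ring.
  by rewrite E0 E2; ring.
have dnz : (psi0 + P1) * (bB - A2) - (psi0 + P2) * (bB - A1) != 0 by rewrite subr_eq0.
have k1 : c 1%N * ((psi0 + P1) * (bB - A2) - (psi0 + P2) * (bB - A1)) = 0.
  transitivity ((c 1%N * (psi0 + P1) + c 2%N * (psi0 + P2)) * (bB - A2)
     - (c 1%N * (bB - A1) + c 2%N * (bB - A2)) * (psi0 + P2)); first by ring.
  by rewrite es ep; ring.
have k2 : c 2%N * ((psi0 + P1) * (bB - A2) - (psi0 + P2) * (bB - A1)) = 0.
  transitivity ((c 1%N * (bB - A1) + c 2%N * (bB - A2)) * (psi0 + P1)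
     - (c 1%N * (psi0 + P1) + c 2%N * (psi0 + P2)) * (bB - A1)); first by ring.
  by rewrite es ep; ring.
move/eqP: k1; rewrite mulf_eq0 (negbTE dnz) orbF => /eqP c1.
move/eqP: k2; rewrite mulf_eq0 (negbTE dnz) orbF => /eqP c2.
have c0 : c 0%N = 0 by move: E0; rewrite c1 c2 !addr0.
by case=> [|[|[|i]]].
Qed.


Lemma geom (W : seq pt) (aB : pt) (bB : R) (psi : pt) (psi0 : R) (w1 w2 : pt) :
  (forall w, w \in W -> dotv aB w <= bB) ->
  (forall w, w \in W -> dotv aB w = bB -> psi0 + dotv psi w = 0) ->
  w1 \in W -> w2 \in W -> dotv aB w1 < bB -> dotv aB w2 < bB ->
  (psi0 + dotv psi w1) * (bB - dotv aB w2) != (psi0 + dotv psi w2) * (bB - dotv aB w1) ->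
  has (fun w => dotv aB w == bB) W ->
  exists (g q1 q2 a' : pt) (b' : R),
   (g \in W /\ q1 \in W /\ q2 \in W /\ dotv aB g = bB) /\
     (forall w, w \in W -> dotv a' w <= b') /\
     (dotv a' g = b' /\ dotv a' q1 = b' /\ dotv a' q2 = b') /\
     (forall w, w \in W -> dotv aB w = bB -> dotv a' w = b' -> w = g) /\
     (psi0 + dotv psi q1) * (bB - dotv aB q2) != (psi0 + dotv psi q2) * (bB - dotv aB q1).
Proof.
move=> Wle Wpsi w1W w2W s1 s2 det hasG.
pose WG := filter (fun w => dotv aB w == bB) W.
have WGn : WG != [::].
  move: hasG => /hasP [w wW wt].
  have : w \in WG by rewrite mem_filter wt wW.
  by apply: contraTneq => ->.
have [g gWG gmax] := argmin_seq (fun x => - dotv x x) WGn.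
move: gWG; rewrite mem_filter => /andP [/eqP sg gW].
pose cf x := dotv g x - dotv g g.
have cneg : forall w, w \in W -> dotv aB w = bB -> cf w <= 0 /\ (cf w = 0 -> w = g).
  move=> w wW sw.
  have wWG : w \in WG by rewrite mem_filter sw eqxx wW.
  have := gmax w wWG; rewrite lerN2 => wg.
  case: (eqVneq w g) => [->|wng]; first by rewrite /cf subrr.
  have wgnz : w - g != 0 by rewrite subr_eq0.
  have := dotv_gt0 wgnz.
  rewrite !dotvB !dotvDl !dotvNl !(dotvC w g).
  move=> h; have cl : cf w < 0 by rewrite /cf; lra.
  by split; [exact: ltW | move=> e; move: cl; rewrite e ltxx].
pose sf x := bB - dotv aB x.
pose pf x := psi0 + dotv psi x.
pose L := filter (fun w => dotv aB w < bB) W.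
pose A x := - cf x / sf x.
pose S x := - pf x / sf x.
have w1L : w1 \in L by rewrite mem_filter s1 w1W.
have w2L : w2 \in L by rewrite mem_filter s2 w2W.
have sfpos : forall w, w \in L -> 0 < sf w.
  by move=> w; rewrite mem_filter => /andP [h _]; rewrite /sf subr_gt0.
have Sne : S w1 != S w2.
  apply: contraNneq det => e; apply/eqP.
  have h1 := lt0r_neq0 (sfpos _ w1L); have h2 := lt0r_neq0 (sfpos _ w2L).
  move: e; rewrite /S => e.
  have := congr1 (fun t => - t * (sf w1 * sf w2)) e.
  rewrite /=; rewrite -/(pf w1) -/(pf w2) -/(sf w1) -/(sf w2).
  move=> e'; transitivity (- (- pf w1 / sf w1) * (sf w1 * sf w2)).
    by field.
  by rewrite e'; field.
have [b [y1 [y2 [y1L y2L Sy e1 e2]]]] := lines A w1L w2L Sne.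
pose al := A y1 + b * S y1.
pose a' := (- al) *: aB + b *: psi + g.
pose b' := - (al * bB + b * psi0 - dotv g g).
have phiE : forall x, dotv a' x = b' + (al * sf x + b * pf x + cf x).
  move=> x; rewrite /a' /b' /sf /pf /cf !dotvDl !dotvZl; ring.
have phiL : forall w, w \in L -> al * sf w + b * pf w + cf w = sf w * (al - (A w + b * S w)).
  move=> w wL; have h := lt0r_neq0 (sfpos _ wL); rewrite /A /S; field.
  by [].
have y1W : y1 \in W by move: y1L; rewrite mem_filter => /andP [].
have y2W : y2 \in W by move: y2L; rewrite mem_filter => /andP [].
exists g, y1, y2, a', b'; split; first by [].
split.
  move=> w wW; rewrite phiE gerDl.
  have := Wle w wW; rewrite le_eqVlt => /orP [/eqP sw|sw].
    have pw := Wpsi w wW sw.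
    have := cneg w wW sw; rewrite /sf /pf sw pw subrr => - [h _]; lra.
  have wL : w \in L by rewrite mem_filter sw wW.
  rewrite phiL // pmulr_rle0 ?sfpos // subr_le0; exact: e2.
split.
  split; first by rewrite phiE /sf /pf /cf sg Wpsi // subrr; ring.
  split; first by rewrite phiE phiL // /al subrr mulr0 addr0.
  by rewrite phiE phiL // /al e1 subrr mulr0 addr0.
split.
  move=> w wW sw; rewrite phiE => h.
  have pw := Wpsi w wW sw.
  apply: (proj2 (cneg w wW sw)).
  by move: h; rewrite /sf /pf sw pw subrr mulr0 mulr0 !add0r => /eqP; rewrite addrC -subr_eq0 addrK => /eqP.
apply: contraNneq Sy => e.
have h1 := lt0r_neq0 (sfpos _ y1L); have h2 := lt0r_neq0 (sfpos _ y2L).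
rewrite /S; move: e; rewrite -/(pf y1) -/(pf y2) -/(sf y1) -/(sf y2) => e.
apply/eqP; apply: (mulIf (mulf_neq0 h1 h2)).
transitivity (- (pf y1 * sf y2)); first by field.
by rewrite e; field.
Qed.

End Geom.



Section Core.
Variables (R : realFieldType) (n : nat).
Notation pt := 'rV[R]_n.

Lemma dim_uniq (S : pset R n) d1 d2 : dim_is S d1 -> dim_is S d2 -> d1 = d2.
Proof.
move=> [m1 [-> [[ps1 [s1 [p1 i1]]] b1]]] [m2 [-> [[ps2 [s2 [p2 i2]]] b2]]].
have h1 := b2 ps1 p1 i1; have h2 := b1 ps2 p2 i2.
rewrite s1 in h1; rewrite s2 in h2.
by have -> : m1 = m2 by apply/eqP; rewrite eqn_leq h1 h2.
Qed.

Lemma dim_ext (S T : pset R n) d : (forall x, S x <-> T x) -> dim_is S d -> dim_is T d.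
Proof.
move=> ST [m [-> [[ps [s [p i]]] b]]]; exists m; split => //; split.
  by exists ps; split => //; split => // x /p /ST.
by move=> qs q iq; apply: b => // x /q /ST.
Qed.

Lemma comb_const (V : seq pt) (w : nat -> R) (g : pt) :
  \sum_(i < size V) w i = 1 ->
  (forall i, (i < size V)%N -> w i != 0 -> V`_i = g) ->
  \sum_(i < size V) w i *: V`_i = g.
Proof.
move=> w1 H; transitivity (\sum_(i < size V) w i *: g).
  apply: eq_bigr => i _; have [->|wi] := eqVneq (w i) 0; first by rewrite !scale0r.
  by rewrite H.
by rewrite -scaler_suml w1 scale1r.
Qed.

Lemma core (V : seq pt) (P B F : pset R n) (aB a : pt) (bB b : R) :
  (forall x, P x <-> convn V x) ->
  (forall x, P x -> dotv aB x <= bB) -> (forall x, B x <-> P x /\ dotv aB x = bB) ->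
  (forall x, P x -> dotv a x <= b) -> (forall x, F x <-> P x /\ dotv a x = b) ->
  (forall G, face P G -> (forall x y, G x -> B x -> G y -> B y -> x = y) ->
     forall d : int, dim_is G d -> d <= 1) ->
  ~ psubset F B -> forall d : int, dim_is F d -> 1 < d ->
  dim_is (psetI F B) (d - 1).
Proof.
move=> PV PaB BP Pa FP TT nFB d dF d1.
have faceF : face P F by exists a, b.
pose W := filter (tightp a b) V.
have FW := face_convn PV Pa FP.
have FP' : forall x, F x -> P x by move=> x /FP [].
pose WG := filter (tightp aB bB) W.
have FBW : forall x, psetI F B x <-> convn WG x.
  apply: (face_convn FW) => [x /FP' /PaB //|x].
  split; first by move=> [Fx /BP [_ e]].
  by move=> [Fx e]; split => //; apply/BP; split => //; apply: FP'.
have dF' := dim_convn FW.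
have dFB := dim_convn FBW.
have -> := dim_uniq dF dF'.
have sub : {subset WG <= W} by move=> x; rewrite mem_filter => /andP [].
have rd := rank_diff sub.
have rWle := rank_leq_col (ML W).
have Wle : forall w, w \in W -> dotv aB w <= bB.
  move=> w; rewrite mem_filter => /andP [_ wV]; apply: PaB; apply/PV; exact: convn_mem.
pose ys : 'rV[R]_(1 + n) := row_mx (const_mx bB) (- aB).
have fys : forall x, fy ys x = bB - dotv aB x by move=> x; rewrite fy_row mxE dotvNl.
pose K := kermx (NL WG).
have ysK : (ys <= K)%MS.
  rewrite sub_kermx fyker; apply/allP => x; rewrite mem_filter => /andP [/eqP t _].
  by rewrite fys t subrr.
have [w0 w0W s0] : exists2 w0, w0 \in W & dotv aB w0 < bB.
  apply: NNPP => hn; apply: nFB => x Fx; apply/BP; split; first exact: FP'.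
  have [w [w0 [w1 ->]]] := proj1 (FW x) Fx.
  apply: comb_supp => // i iW _.
  have := Wle _ (mem_nth 0 iW); rewrite le_eqVlt => /orP [/eqP //| h].
  by exfalso; apply: hn; exists W`_i => //; exact: mem_nth.
pose vs := ys *m NL W.
have vsnz : vs != 0.
  rewrite /vs fyker; apply/negP => /allP /(_ w0 w0W); rewrite fys subr_eq0.
  by move=> /eqP e; move: s0; rewrite e ltxx.
have D1 : (1 <= \rank (K *m NL W))%N.
  have := mxrankS (submxMr (NL W) ysK); rewrite rank_rV vsnz; exact.
have D2 : (\rank (K *m NL W) <= 1)%N.
  rewrite leqNgt; apply/negP => D2.
  have nsub : ~~ (K *m NL W <= vs)%MS.
    apply/negP => /mxrankS; rewrite rank_rV vsnz => h.
    by move: (leq_ltn_trans h D2); rewrite ltnn.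
  have [i hi] := row_subPn nsub.
  pose y := row i K.
  have yK : y *m NL WG == 0 by rewrite -sub_kermx row_sub.
  pose psi0 := lsubmx y 0 0; pose psi := rsubmx y.
  have fyy : forall x, fy y x = psi0 + dotv psi x by move=> x; rewrite -[y]hsubmxK fy_row.
  have Wpsi : forall w, w \in W -> dotv aB w = bB -> psi0 + dotv psi w = 0.
    move=> w wW e; rewrite -fyy.
    have wG : w \in WG by rewrite mem_filter /tightp e eqxx wW.
    by move: yK; rewrite fyker => /allP /(_ w wG) /eqP.
  have hasG : has (fun w => dotv aB w == bB) W.
    case: (boolP (has (fun w => dotv aB w == bB) W)) => // hn; exfalso.
    have WG0 : WG = [::] by move: hn; rewrite has_filter negbK => /eqP.
    have : d <= 1.
      apply: (TT F faceF) => // x y0 Fx Bx.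
      have : convn WG x by apply/FBW.
      by rewrite WG0 => - [w [_ [w1 _]]]; move: w1; rewrite big_ord0 => /eqP; rewrite eq_sym oner_eq0.
    by rewrite leNgt d1.
  have [w1 [w2 [w1W [w2W [s1 [s2 det]]]]]] : exists w1 w2, w1 \in W /\ w2 \in W /\
      dotv aB w1 < bB /\ dotv aB w2 < bB /\
      (psi0 + dotv psi w1) * (bB - dotv aB w2) != (psi0 + dotv psi w2) * (bB - dotv aB w1).
    apply: NNPP => hn; move: hi; apply/negP/negPn.
    have eqall : forall u1 u2, u1 \in W -> u2 \in W -> dotv aB u1 < bB -> dotv aB u2 < bB ->
        (psi0 + dotv psi u1) * (bB - dotv aB u2) = (psi0 + dotv psi u2) * (bB - dotv aB u1).
      move=> u1 u2 u1W u2W su1 su2.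
      case: (eqVneq ((psi0 + dotv psi u1) * (bB - dotv aB u2))
                    ((psi0 + dotv psi u2) * (bB - dotv aB u1))) => // ne.
      by exfalso; apply: hn; exists u1, u2.
    pose ka := (psi0 + dotv psi w0) / (bB - dotv aB w0).
    have E : y *m NL W = ka *: vs.
      apply/rowP => j; rewrite /vs /NL /ML Mf_tr_entry [RHS]mxE Mf_tr_entry fyy fys.
      have := Wle _ (mem_nth 0 (ltn_ord j)); rewrite le_eqVlt => /orP [/eqP e| lt].
        by rewrite (Wpsi _ (mem_nth 0 (ltn_ord j)) e) e subrr mulr0.
      have h := eqall _ _ (mem_nth 0 (ltn_ord j)) w0W lt s0.
      have s0nz : bB - dotv aB w0 != 0 by rewrite subr_eq0 gt_eqF.
      rewrite /ka; apply: (mulIf s0nz); rewrite h; field => //.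
    by rewrite row_mul -/y E scalemx_sub // submx_refl.
  have [g [q1 [q2 [a' [b' [[gW [q1W [q2W sg]]] [val [[tg [t1 t2]] [uniq det']]]]]]]]] :=
    geom Wle Wpsi w1W w2W s1 s2 det hasG.
  pose H := fun x => F x /\ dotv a' x = b'.
  have FHv : forall x, F x -> dotv a' x <= b' by move=> x /FW Fx; apply: convn_le Fx val.
  have faceFH : face F H by exists a', b'; split.
  have facePH := face_face PV faceF faceFH.
  have HW := face_convn FW FHv (fun x => iff_refl (H x)).
  have dH := dim_convn HW.
  have Hle := TT H facePH.
  have uq : forall x, H x -> B x -> x = g.
    move=> x [Fx ax] Bx.
    have [w [w0' [w1' xe]]] := proj1 (FBW x) (conj Fx Bx).
    have WGv : forall v, v \in WG -> dotv a' v <= b' by move=> v /sub; exact: val.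
    have tgt := comb_tight w0' w1' WGv (etrans (congr1 _ (esym xe)) ax).
    rewrite xe; apply: comb_const => // k iG wi.
    have := mem_nth 0 iG; rewrite mem_filter => /andP [/eqP sv vW].
    exact: (uniq _ vW sv) (tgt k iG wi).
  have uq2 : forall x y, H x -> B x -> H y -> B y -> x = y.
    by move=> x y0 Hx Bx Hy By; rewrite (uq x Hx Bx) (uq y0 Hy By).
  have hle := Hle uq2 _ dH.
  have ind := indep3 sg (Wpsi g gW sg) det'.
  have inH : forall x, x \in [:: g; q1; q2] -> H x.
    move=> x; rewrite !inE => /orP [/eqP ->|/orP [/eqP ->|/eqP ->]]; split => //;
      apply/FW; apply: convn_mem => //.
  move: dH hle => [m [e [_ bnd]]] hle.
  have h3 := bnd _ inH ind.
  move: h3 hle; rewrite e /=; clear; move=> h3 hle; lia.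
have rGle := rank_leq_col (ML WG).
rewrite -/K in rd.
have rG : (\rank (ML WG)).+1 = \rank (ML W) by lia.
have -> : ((\rank (ML W))%:Z - 1 - 1) = (\rank (ML WG))%:Z - 1 by lia.
exact: dFB.
Qed.

End Core.

Unset Implicit Arguments. Set Strict Implicit.

Theorem mainTheorem3 (R : realFieldType) (n : nat) (P B : pset R n) :
  treetope P B ->
  (forall (F : pset R n) (d : int), face P F -> dim_is F d -> 1 < d ->
     psubset F B \/ (facet F (psetI F B) /\ treetope F (psetI F B))) /\
  (forall (F : pset R n) (d e : int), face P F -> dim_is F d -> 1 < d ->
     dim_is (psetI F B) e -> d - 1 <= e).
Proof.
move=> [[V PV0] [[[aB [bB [PaB BP]]] _] TT]].
have PV : forall x, P x <-> convn V x.
  by move=> x; rewrite -conv_convn; exact: PV0.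
have key : forall F d, face P F -> dim_is F d -> 1 < d -> ~ psubset F B ->
    facet F (psetI F B) /\ treetope F (psetI F B).
  move=> F d faceF dF d1 nFB.
  have faceF' := faceF; move: faceF' => [a [b [Pa FP]]].
  have FP' : forall x, F x -> P x by move=> x /FP [].
  have dFB := core PV PaB BP Pa FP TT nFB dF d1.
  have faceFB : face F (psetI F B).
    exists aB, bB; split; first by move=> x /FP' /PaB.
    move=> x; split; first by move=> [Fx /BP [_ e]].
    by move=> [Fx e]; split => //; apply/BP; split => //; apply: FP'.
  have fac : facet F (psetI F B) by split => //; exists d.
  split => //; split.
    exists (filter (tightp a b) V) => x; rewrite conv_convn.
    exact: (face_convn PV Pa FP).
  split => // G faceG uq d' dG.
  apply: (TT G (face_face PV faceF faceG)) dG => x y Gx Bx Gy By.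
  have GF : forall x, G x -> F x by case: faceG => [c [e [_ GF]]] z /GF [].
  exact: (uq x y Gx (conj (GF x Gx) Bx) Gy (conj (GF y Gy) By)).
split.
  move=> F d faceF dF d1; case: (classic (psubset F B)) => h; first by left.
  by right; apply: (key F d).
move=> F d e faceF dF d1 de; case: (classic (psubset F B)) => h.
  have dd : dim_is (psetI F B) d.
    apply: (dim_ext _ dF) => x; split; first by move=> Fx; split => //; apply: h.
    by case.
  rewrite (dim_uniq de dd) lerBlDr lerDl //.
have [[_ [d0 [dF0 dFB0]]] _] := key F d faceF dF d1 h.
rewrite (dim_uniq de dFB0) (dim_uniq dF0 dF) //.
Qed.
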